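(* Let $h:\mathbb{R}\to\mathbb{R}$ be a smooth function with $h(T)=\pi/2$ for $T\le 0$, $0<h(T)<\pi/2$ for $0<T<1$, and $h(T)=0$ for $T\ge 1$. For $0<x<1$ let $g(x)=\tan\bigl(h(x)\bigr)$, and for $0\le x<1$ let $B(x)=\exp\left(\int_0^x \cot\bigl(h(z)\bigr)\,dz\right)$. Assume $g'''(x)<0$ for all $0<x<1$. Fix $\kappa\in(0,1)$ and define, for $\kappa<x<1$, $$\mathcal{D}(x)=\frac{1}{B(x)}\int_\kappa^{x} B'(z)\,\frac{\cos(x-z)}{x-z}\left(\frac{g(x)-g(z)}{x-z}-g'(x)\right)dz .$$ Then $\lim_{x\to 1_-}\mathcal{D}(x)=0$.
   Context: (In the paper the variable $x$ appears as $y+A$, and $\alpha=x-z$.) *)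

(* Defs.v *)
From Stdlib Require Import Reals.
From Coquelicot Require Import Coquelicot.
Open Scope R_scope.

Definition cot (x : R) : R := cos x / sin x.

Definition smooth (f : R -> R) : Prop := forall (n : nat) (x : R), ex_derive_n f n x.

Definition gfun (h : R -> R) (x : R) : R := tan (h x).

Definition Bfun (h : R -> R) (x : R) : R := exp (RInt (fun z => cot (h z)) 0 x).

Definition Dfun (h : R -> R) (kappa x : R) : R :=
  / Bfun h x *
  RInt (fun z => Derive (Bfun h) z * (cos (x - z) / (x - z)) *
                 ((gfun h x - gfun h z) / (x - z) - Derive (gfun h) x)) kappa x.

(* Main.v *)
Require Import Defs.
From Stdlib Require Import Reals Lra Psatz.
From Coquelicot Require Import Coquelicot.
Open Scope R_scope.


Definition g1 (h : R -> R) t := Derive h t / cos (h t) ^ 2.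
Definition g2 (h : R -> R) t :=
  Derive (Derive h) t / cos (h t) ^ 2 + 2 * (Derive h t) ^ 2 * sin (h t) / cos (h t) ^ 3.

Lemma sm1 h : smooth h -> forall t, ex_derive h t.
Proof. intros H t. exact (H 1%nat t). Qed.
Lemma sm2 h : smooth h -> forall t, ex_derive (Derive h) t.
Proof. intros H t. exact (H 2%nat t). Qed.
Lemma sm3 h : smooth h -> forall t, ex_derive (Derive (Derive h)) t.
Proof. intros H t. exact (H 3%nat t). Qed.

Lemma is_derive_g h t : smooth h -> cos (h t) <> 0 -> is_derive (gfun h) t (g1 h t).
Proof.
  intros Hs Hc. unfold gfun, tan, g1.
  auto_derive.
  - repeat split; auto; apply sm1; auto.
  - assert (E := sin2_cos2 (h t)). unfold Rsqr in E.
    replace (Derive (fun x => h x) t) with (Derive h t) by reflexivity.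
    transitivity (Derive h t * (sin (h t) * sin (h t) + cos (h t) * cos (h t)) / cos (h t) ^ 2).
    + field; auto.
    + rewrite E. field; auto.
Qed.

Lemma is_derive_g1 h t : smooth h -> cos (h t) <> 0 -> is_derive (g1 h) t (g2 h t).
Proof.
  intros Hs Hc. unfold g1, g2.
  auto_derive.
  - repeat split; auto. apply sm2; auto. apply sm1; auto.
  - replace (Derive (fun x => h x) t) with (Derive h t) by reflexivity.
    replace (Derive (fun x => Derive h x) t) with (Derive (Derive h) t) by reflexivity.
    field; auto.
Qed.

Lemma cos_h_pos h (h_mid : forall T, 0 < T < 1 -> 0 < h T < PI / 2)
  (h_right : forall T, 1 <= T -> h T = 0) t : 0 < t -> 0 < cos (h t).
Proof.
  intros Ht. destruct (Rlt_or_le t 1) as [H|H].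
  - apply cos_gt_0; specialize (h_mid t (conj Ht H)); lra.
  - rewrite h_right; auto. rewrite cos_0; lra.
Qed.

Lemma sin_h_pos h (h_left : forall T, T <= 0 -> h T = PI / 2)
  (h_mid : forall T, 0 < T < 1 -> 0 < h T < PI / 2) t : t < 1 -> 0 < sin (h t).
Proof.
  intros Ht. destruct (Rle_or_lt t 0) as [H|H].
  - rewrite h_left; auto. rewrite sin_PI2; lra.
  - apply sin_gt_0; specialize (h_mid t (conj H Ht)); lra.
Qed.

Lemma right_zero (f : R -> R) : continuous f 1 -> (forall t, 1 < t -> f t = 0) -> f 1 = 0.
Proof.
  intros Hc Hz. destruct (Req_dec (f 1) 0) as [E|E]; auto. exfalso.
  assert (Hp : 0 < Rabs (f 1)) by (apply Rabs_pos_lt; auto).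
  destruct (proj1 (filterlim_locally f (f 1)) Hc (mkposreal _ Hp)) as [d Hd].
  assert (Hb : ball 1 d (1 + d/2)).
  { unfold ball; simpl; unfold AbsRing_ball, abs, minus, plus, opp; simpl.
    destruct d as [d dp]; simpl. rewrite Rabs_right; lra. }
  specialize (Hd _ Hb). rewrite Hz in Hd.
  2:{ destruct d; simpl; lra. }
  unfold ball in Hd; simpl in Hd; unfold AbsRing_ball, abs, minus, plus, opp in Hd; simpl in Hd.
  rewrite Rplus_0_l, Rabs_Ropp in Hd. lra.
Qed.

Lemma locally_gt1 t : 1 < t -> locally t (fun u => 1 < u).
Proof.
  intros Ht. assert (Hp : 0 < t - 1) by lra. exists (mkposreal _ Hp).
  intros u Hu. unfold ball in Hu; simpl in Hu; unfold AbsRing_ball, abs, minus, plus, opp in Hu; simpl in Hu.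
  apply Rabs_def2 in Hu. lra.
Qed.

Lemma dh_right h (h_right : forall T, 1 <= T -> h T = 0) t : 1 < t -> Derive h t = 0.
Proof.
  intros Ht. rewrite (Derive_ext_loc h (fun _ => 0)). apply Derive_const.
  eapply filter_imp; [|apply locally_gt1; eauto]. intros u Hu; simpl. apply h_right; lra.
Qed.

Lemma ddh_right h (h_right : forall T, 1 <= T -> h T = 0) t : 1 < t -> Derive (Derive h) t = 0.
Proof.
  intros Ht. rewrite (Derive_ext_loc (Derive h) (fun _ => 0)). apply Derive_const.
  eapply filter_imp; [|apply locally_gt1; eauto]. intros u Hu; simpl. apply dh_right; auto.
Qed.

Lemma dh_1 h (h_smooth : smooth h) (h_right : forall T, 1 <= T -> h T = 0) : Derive h 1 = 0.
Proof. apply right_zero. apply (ex_derive_continuous (Derive h)), sm2; auto. apply dh_right; auto. Qed.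

Lemma ddh_1 h (h_smooth : smooth h) (h_right : forall T, 1 <= T -> h T = 0) : Derive (Derive h) 1 = 0.
Proof. apply right_zero. apply (ex_derive_continuous (Derive (Derive h))), sm3; auto. apply ddh_right; auto. Qed.

Lemma g2_1 h (h_smooth : smooth h) (h_right : forall T, 1 <= T -> h T = 0) : g2 h 1 = 0.
Proof. unfold g2. rewrite ddh_1, dh_1, h_right; auto; try lra. Qed.

Lemma g_1 h (h_right : forall T, 1 <= T -> h T = 0) : gfun h 1 = 0.
Proof. unfold gfun. rewrite h_right; try lra. apply tan_0. Qed.

Lemma sm4 h : smooth h -> forall t, ex_derive (Derive (Derive (Derive h))) t.
Proof. intros H t. exact (H 4%nat t). Qed.

Lemma cont_g2 h (h_smooth : smooth h) t : cos (h t) <> 0 -> continuous (g2 h) t.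
Proof.
  intros Hc. apply (ex_derive_continuous (g2 h)). unfold g2.
  auto_derive. repeat split; auto.
  - apply sm3; auto.
  - apply sm1; auto.
  - apply sm2; auto.
  - apply sm1; auto.
  - apply sm1; auto.
  - repeat (apply Rmult_integral_contrapositive_currified; auto).
Qed.

Lemma locally_lt1 t : t < 1 -> locally t (fun u => u < 1).
Proof.
  intros Ht. assert (Hp : 0 < 1 - t) by lra. exists (mkposreal _ Hp).
  intros u Hu. unfold ball in Hu; simpl in Hu; unfold AbsRing_ball, abs, minus, plus, opp in Hu; simpl in Hu.
  apply Rabs_def2 in Hu. lra.
Qed.

Lemma cont_cot h (h_smooth : smooth h) (h_left : forall T, T <= 0 -> h T = PI / 2)
  (h_mid : forall T, 0 < T < 1 -> 0 < h T < PI / 2) t : t < 1 -> continuous (fun z => cot (h z)) t.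
Proof.
  intros Ht. apply (ex_derive_continuous (fun z => cot (h z))). unfold cot.
  assert (S := sin_h_pos h h_left h_mid t Ht).
  auto_derive. repeat split; try (apply sm1; auto). lra.
Qed.

Definition Ifun h x := RInt (fun z => cot (h z)) 0 x.

Lemma ex_RInt_cot h (h_smooth : smooth h) (h_left : forall T, T <= 0 -> h T = PI / 2)
  (h_mid : forall T, 0 < T < 1 -> 0 < h T < PI / 2) a b : a < 1 -> b < 1 ->
  ex_RInt (fun z => cot (h z)) a b.
Proof.
  intros Ha Hb. apply (@ex_RInt_continuous R_CompleteNormedModule). intros z Hz. apply cont_cot; auto.
  destruct Hz as [_ Hz]. unfold Rmax in Hz. destruct (Rle_dec a b); lra.
Qed.

Lemma is_derive_I h (h_smooth : smooth h) (h_left : forall T, T <= 0 -> h T = PI / 2)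
  (h_mid : forall T, 0 < T < 1 -> 0 < h T < PI / 2) x : x < 1 ->
  is_derive (Ifun h) x (cot (h x)).
Proof.
  intros Hx. apply (is_derive_RInt (fun z => cot (h z)) (Ifun h) 0 x).
  - eapply filter_imp; [|apply locally_lt1; eauto]. intros u Hu.
    unfold Ifun. apply (@RInt_correct R_CompleteNormedModule). apply ex_RInt_cot; auto; simpl in Hu; lra.
  - apply cont_cot; auto.
Qed.

Definition bB h x := Bfun h x * cot (h x).

Lemma is_derive_B h (h_smooth : smooth h) (h_left : forall T, T <= 0 -> h T = PI / 2)
  (h_mid : forall T, 0 < T < 1 -> 0 < h T < PI / 2) x : x < 1 ->
  is_derive (Bfun h) x (bB h x).
Proof.
  intros Hx. unfold bB, Bfun.
  assert (H := is_derive_comp exp (Ifun h) x (exp (Ifun h x)) (cot (h x))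
    (proj2 (is_derive_Reals _ _ _) (derivable_pt_lim_exp _)) (is_derive_I h h_smooth h_left h_mid x Hx)).
  unfold scal in H; simpl in H; unfold mult in H; simpl in H. rewrite Rmult_comm in H. exact H.
Qed.

Lemma cont_g1 h (h_smooth : smooth h) t : cos (h t) <> 0 -> continuous (g1 h) t.
Proof. intros Hc. apply (ex_derive_continuous (g1 h)). eexists. apply is_derive_g1; auto. Qed.

Lemma g1_bound h (h_smooth : smooth h) (h_mid : forall T, 0 < T < 1 -> 0 < h T < PI / 2)
  (h_right : forall T, 1 <= T -> h T = 0) a b : 0 < a -> a <= b ->
  exists L, 0 < L /\ forall t, a <= t <= b -> Rabs (g1 h t) <= L.
Proof.
  intros Ha Hab.
  destruct (continuity_ab_maj (fun t => Rabs (g1 h t)) a b Hab) as [Mx [HM _]].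
  - intros c Hc. apply continuity_pt_filterlim. apply continuous_Rabs_comp.
    apply cont_g1; auto. apply Rgt_not_eq, cos_h_pos; auto; lra.
  - exists (Rabs (g1 h Mx) + 1). split. pose proof (Rabs_pos (g1 h Mx)); lra.
    intros t Ht. specialize (HM t Ht). simpl in HM. lra.
Qed.

Lemma g_pos h (h_mid : forall T, 0 < T < 1 -> 0 < h T < PI / 2) z : 0 < z < 1 -> 0 < gfun h z.
Proof.
  intros Hz. unfold gfun. specialize (h_mid z Hz).
  apply tan_gt_0; lra.
Qed.

Lemma cot_eq h (h_mid : forall T, 0 < T < 1 -> 0 < h T < PI / 2) z : 0 < z < 1 -> cot (h z) = / gfun h z.
Proof.
  intros Hz. pose proof (g_pos h h_mid z Hz) as G. unfold gfun, tan, cot in *.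
  specialize (h_mid z Hz).
  assert (0 < cos (h z)) by (apply cos_gt_0; lra).
  assert (0 < sin (h z)) by (apply sin_gt_0; lra).
  field. lra.
Qed.

Lemma g_lin h (h_smooth : smooth h) (h_mid : forall T, 0 < T < 1 -> 0 < h T < PI / 2)
  (h_right : forall T, 1 <= T -> h T = 0) :
  exists L, 0 < L /\ forall z, 1/2 <= z < 1 -> gfun h z <= L * (1 - z).
Proof.
  destruct (g1_bound h h_smooth h_mid h_right (1/2) 1) as [L [HL HLb]]; try lra.
  exists L; split; auto. intros z Hz.
  destruct (MVT_cor2 (gfun h) (g1 h) z 1) as [c [Hc1 Hc2]]; try lra.
  - intros c Hc. apply is_derive_Reals. apply is_derive_g; auto.
    apply Rgt_not_eq, cos_h_pos; auto; lra.
  - rewrite g_1 in Hc1; auto.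
    assert (Hb := HLb c ltac:(lra)).
    assert (- g1 h c <= L) by (pose proof (Rabs_maj2 (g1 h c)); lra).
    assert (HE : gfun h z = - g1 h c * (1 - z)) by lra.
    rewrite HE. apply Rmult_le_compat_r; lra.
Qed.

Lemma B_big h (h_smooth : smooth h) (h_left : forall T, T <= 0 -> h T = PI / 2)
  (h_mid : forall T, 0 < T < 1 -> 0 < h T < PI / 2)
  (h_right : forall T, 1 <= T -> h T = 0) N :
  exists d, 0 < d /\ forall x, 1 - d < x < 1 -> N <= Bfun h x.
Proof.
  destruct (g_lin h h_smooth h_mid h_right) as [L [HL HLz]].
  set (phi := fun x => Ifun h x + ln (1 - x) / L).
  assert (Hphi : forall x, 1/2 < x < 1 -> phi (1/2) <= phi x).
  { intros x Hx.
    destruct (MVT_cor2 phi (fun c => cot (h c) - / (L * (1 - c))) (1/2) x) as [c [Hc1 Hc2]]; try lra.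
    - intros c Hc. apply is_derive_Reals. unfold phi.
      replace (cot (h c) - / (L * (1 - c))) with (cot (h c) + (- / (L * (1 - c)))) by ring.
      apply (is_derive_plus (Ifun h) (fun x => ln (1 - x) / L)).
      + apply is_derive_I; auto; lra.
      + auto_derive. lra. field. lra.
    - assert (/ (L * (1 - c)) <= cot (h c)).
      { rewrite cot_eq; auto; try lra. apply Rinv_le_contravar.
        apply g_pos; auto; lra. apply HLz; lra. }
      assert (0 <= (cot (h c) - / (L * (1 - c))) * (x - 1/2)).
      { apply Rmult_le_pos; lra. }
      lra. }
  set (N' := Rmax N 1).
  set (C := phi (1/2)).
  set (e := exp (L * (C - ln N'))).
  assert (He : 0 < e) by apply exp_pos.
  exists (Rmin (1/2) e). split. apply Rmin_glb_lt; lra.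
  intros x Hx.
  assert (Hx1 : 1 - x < e) by (pose proof (Rmin_r (1/2) e); lra).
  assert (Hx2 : 1/2 < x) by (pose proof (Rmin_l (1/2) e); lra).
  specialize (Hphi x (conj Hx2 (proj2 Hx))). unfold phi in Hphi; fold C in Hphi.
  assert (Hln : ln (1 - x) <= L * (C - ln N')).
  { rewrite <- (ln_exp (L * (C - ln N'))). apply ln_le; unfold e in Hx1; lra. }
  assert (HI : ln N' <= Ifun h x).
  { assert (ln (1 - x) / L <= C - ln N').
    { apply (Rmult_le_reg_l L); auto. replace (L * (ln (1 - x) / L)) with (ln (1 - x)) by (field; lra). exact Hln. }
    unfold C, phi in H. lra. }
  assert (HN' : N <= N') by apply Rmax_l.
  assert (HN1 : 1 <= N') by apply Rmax_r.
  unfold Bfun. fold (Ifun h x).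
  apply Rle_trans with N'; auto.
  rewrite <- (exp_ln N') by lra.
  destruct (Rle_lt_or_eq_dec _ _ HI) as [Hl|Hl].
  - left. apply exp_increasing; auto.
  - rewrite Hl. lra.
Qed.

Lemma MVT_sym (f f' : R -> R) p q : p <> q ->
  (forall c, Rmin p q <= c <= Rmax p q -> is_derive f c (f' c)) ->
  exists c, Rmin p q < c < Rmax p q /\ f q - f p = f' c * (q - p).
Proof.
  intros Hpq Hd. destruct (Rlt_or_le p q) as [H|H].
  - rewrite Rmin_left, Rmax_right in * by lra.
    destruct (MVT_cor2 f f' p q H) as [c [H1 H2]].
    + intros c Hc. apply is_derive_Reals. apply Hd; auto.
    + exists c; split; auto.
  - assert (H' : q < p) by lra.
    rewrite Rmin_right, Rmax_left in * by lra.
    destruct (MVT_cor2 f f' q p H') as [c [H1 H2]].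
    + intros c Hc. apply is_derive_Reals. apply Hd; auto.
    + exists c; split; auto. lra.
Qed.

Definition psi h x z := gfun h z - gfun h x - g1 h x * (z - x).
Definition mk h x z := if Req_EM_T z x then g2 h x else 2 * psi h x z / (z - x) ^ 2.

Lemma mk_repr h (h_smooth : smooth h) (h_mid : forall T, 0 < T < 1 -> 0 < h T < PI / 2)
  (h_right : forall T, 1 <= T -> h T = 0) x z : 0 < x -> 0 < z ->
  exists d, Rmin z x <= d <= Rmax z x /\ mk h x z = g2 h d.
Proof.
  intros Hx Hz. unfold mk. destruct (Req_EM_T z x) as [E|E].
  - exists x. subst. rewrite Rmin_left, Rmax_left; auto; lra.
  - assert (Hpos : forall t, Rmin z x <= t <= Rmax z x -> 0 < t).
    { intros t Ht. pose proof (Rmin_glb_lt z x 0 Hz Hx). lra. }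
    assert (Hcos : forall t, Rmin z x <= t <= Rmax z x -> cos (h t) <> 0).
    { intros t Ht. apply Rgt_not_eq, cos_h_pos; auto. }
    set (chi := fun t => (t - x) ^ 2).
    set (phi := fun t => psi h x t * chi z - chi t * psi h x z).
    destruct (MVT_sym phi (fun t => (g1 h t - g1 h x) * chi z - 2 * (t - x) * psi h x z) z x E)
      as [c [Hc1 Hc2]].
    { intros c Hc. unfold phi, psi, chi.
      assert (Hg := is_derive_g h c h_smooth (Hcos c Hc)).
      auto_derive.
      - eexists; exact Hg.
      - replace (Derive (fun x0 => gfun h x0) c) with (g1 h c).
        2:{ symmetry. apply is_derive_unique. exact Hg. }
        ring. }
    assert (Hphi : phi x - phi z = 0).
    { unfold phi, psi, chi. ring. }
    assert (Hcx : c <> x).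
    { intro. subst. unfold Rmin, Rmax in Hc1. destruct (Rle_dec z x); lra. }
    assert (Hd0 : (g1 h c - g1 h x) * chi z - 2 * (c - x) * psi h x z = 0).
    { assert (x - z <> 0) by lra.
      apply (Rmult_eq_reg_r (x - z)); auto. lra. }
    destruct (MVT_sym (g1 h) (g2 h) x c (not_eq_sym Hcx)) as [d [Hd1 Hd2]].
    { intros t Ht. apply is_derive_g1; auto. apply Hcos.
      unfold Rmin, Rmax in *. destruct (Rle_dec z x), (Rle_dec x c); lra. }
    exists d. split.
    { unfold Rmin, Rmax in *. destruct (Rle_dec z x), (Rle_dec x c); lra. }
    unfold chi in Hd0. rewrite Hd2 in Hd0.
    assert (z - x <> 0) by lra.
    assert (c - x <> 0) by lra.
    apply (Rmult_eq_reg_r ((c - x) * (z - x) ^ 2)).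
    2:{ apply Rmult_integral_contrapositive_currified; auto. apply pow_nonzero; auto. }
    field_simplify; auto. field_simplify in Hd0. lra.
Qed.

Lemma ball_R (c e u : R) : ball c e u <-> Rabs (u - c) < e.
Proof. unfold ball; simpl; unfold AbsRing_ball, abs, minus, plus, opp; simpl. tauto. Qed.

Lemma mk_cont h (h_smooth : smooth h) (h_mid : forall T, 0 < T < 1 -> 0 < h T < PI / 2)
  (h_right : forall T, 1 <= T -> h T = 0) x z : 0 < x -> 0 < z -> continuous (mk h x) z.
Proof.
  intros Hx Hz. destruct (Req_EM_T z x) as [E|E].
  - subst z. apply filterlim_locally. intros eps.
    assert (Hc := cont_g2 h h_smooth x (Rgt_not_eq _ _ (cos_h_pos h h_mid h_right x Hx))).
    destruct (proj1 (filterlim_locally (g2 h) (g2 h x)) Hc eps) as [d Hd].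
    assert (Hp : 0 < Rmin d x) by (apply Rmin_glb_lt; auto; apply cond_pos).
    exists (mkposreal _ Hp). intros y Hy. apply ball_R in Hy. simpl in Hy. change (Rabs (y - x) < Rmin d x) in Hy.
    assert (Hy1 : Rabs (y - x) < d) by (pose proof (Rmin_l d x); lra).
    assert (Hy2 : Rabs (y - x) < x) by (pose proof (Rmin_r d x); lra).
    apply Rabs_def2 in Hy2.
    destruct (mk_repr h h_smooth h_mid h_right x y Hx ltac:(lra)) as [t [Ht Hm]].
    replace (mk h x x) with (g2 h x).
    2:{ unfold mk. destruct (Req_EM_T x x); congruence. }
    rewrite Hm. apply Hd. apply ball_R.
    unfold Rmin, Rmax in Ht. destruct (Rle_dec y x); apply Rabs_def2 in Hy1; apply Rabs_def1; lra.
  - apply (continuous_ext_loc _ (fun t => 2 * psi h x t / (t - x) ^ 2)).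
    + assert (Hp : 0 < Rmin (Rabs (z - x)) z).
      { apply Rmin_glb_lt; auto. apply Rabs_pos_lt. lra. }
      exists (mkposreal _ Hp). intros y Hy. apply ball_R in Hy. simpl in Hy. change (Rabs (y - z) < Rmin (Rabs (z - x)) z) in Hy.
      unfold mk. destruct (Req_EM_T y x) as [E'|E']; auto.
      rewrite E' in Hy. pose proof (Rmin_l (Rabs (z - x)) z). rewrite (Rabs_minus_sym x z) in Hy. lra.
    + apply (ex_derive_continuous (fun t => 2 * psi h x t / (t - x) ^ 2)). unfold psi.
      assert (Hg := is_derive_g h z h_smooth (Rgt_not_eq _ _ (cos_h_pos h h_mid h_right z Hz))).
      auto_derive. repeat split; auto.
      * eexists; exact Hg.
      * assert (z + - x <> 0) by lra. rewrite Rmult_1_r. apply Rmult_integral_contrapositive_currified; auto.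
Qed.

Definition Kc h x z := - cos (x - z) * mk h x z / 2.
Definition Gint h x z := bB h z * Kc h x z.

Lemma integrand_eq h (h_smooth : smooth h) (h_left : forall T, T <= 0 -> h T = PI / 2)
  (h_mid : forall T, 0 < T < 1 -> 0 < h T < PI / 2)
  (h_right : forall T, 1 <= T -> h T = 0) x z : 0 < x -> z < 1 -> z <> x ->
  Derive (Bfun h) z * (cos (x - z) / (x - z)) *
                 ((gfun h x - gfun h z) / (x - z) - Derive (gfun h) x) = Gint h x z.
Proof.
  intros Hx Hz E.
  rewrite (is_derive_unique _ _ _ (is_derive_B h h_smooth h_left h_mid z Hz)).
  rewrite (is_derive_unique _ _ _ (is_derive_g h x h_smooth (Rgt_not_eq _ _ (cos_h_pos h h_mid h_right x Hx)))).
  unfold Gint, Kc, mk, psi. destruct (Req_EM_T z x) as [E'|E']; [congruence|].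
  assert (x - z <> 0) by lra. assert (z - x <> 0) by lra.
  field. auto.
Qed.

Lemma mult_eq (a b : R) : mult a b = a * b.
Proof. reflexivity. Qed.

Lemma cont_mult (f g : R -> R) x : continuous f x -> continuous g x -> continuous (fun y => f y * g y) x.
Proof. intros. apply (continuous_mult f g x); auto. Qed.

Lemma bB_cont h (h_smooth : smooth h) (h_left : forall T, T <= 0 -> h T = PI / 2)
  (h_mid : forall T, 0 < T < 1 -> 0 < h T < PI / 2) z : z < 1 -> continuous (bB h) z.
Proof.
  intros Hz. unfold bB. apply cont_mult.
  - apply (ex_derive_continuous (Bfun h)). eexists. apply is_derive_B; auto.
  - apply cont_cot; auto.
Qed.

Lemma Gint_cont h (h_smooth : smooth h) (h_left : forall T, T <= 0 -> h T = PI / 2)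
  (h_mid : forall T, 0 < T < 1 -> 0 < h T < PI / 2)
  (h_right : forall T, 1 <= T -> h T = 0) x z : 0 < x -> 0 < z < 1 -> continuous (Gint h x) z.
Proof.
  intros Hx Hz. unfold Gint. apply cont_mult.
  - apply bB_cont; auto; lra.
  - unfold Kc. apply (cont_mult (fun y => - cos (x - y) * mk h x y) (fun _ => / 2)).
    + apply cont_mult.
      * apply (ex_derive_continuous (fun y => - cos (x - y))). auto_derive. auto.
      * apply mk_cont; auto; lra.
    + apply continuous_const.
Qed.

Lemma Gint_ex h (h_smooth : smooth h) (h_left : forall T, T <= 0 -> h T = PI / 2)
  (h_mid : forall T, 0 < T < 1 -> 0 < h T < PI / 2)
  (h_right : forall T, 1 <= T -> h T = 0) x a b : 0 < x -> 0 < a -> a <= b -> b < 1 ->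
  ex_RInt (Gint h x) a b.
Proof.
  intros Hx Ha Hab Hb. apply (@ex_RInt_continuous R_CompleteNormedModule).
  intros z Hz. rewrite Rmin_left, Rmax_right in Hz by lra. apply Gint_cont; auto; lra.
Qed.

Lemma B_int h (h_smooth : smooth h) (h_left : forall T, T <= 0 -> h T = PI / 2)
  (h_mid : forall T, 0 < T < 1 -> 0 < h T < PI / 2) c a b : 0 < a -> a <= b -> b < 1 ->
  ex_RInt (fun z => bB h z * c) a b /\ RInt (fun z => bB h z * c) a b = c * (Bfun h b - Bfun h a).
Proof.
  intros Ha Hab Hb.
  assert (H : is_RInt (fun z => bB h z * c) a b (c * (Bfun h b - Bfun h a))).
  { assert (H := is_RInt_derive (fun z => Bfun h z * c) (fun z => bB h z * c) a b).
    replace (c * (Bfun h b - Bfun h a)) with (minus (Bfun h b * c) (Bfun h a * c)).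
    2:{ unfold minus, plus, opp; simpl. ring. }
    apply H.
    - intros z Hz. rewrite Rmin_left, Rmax_right in Hz by lra.
      apply (@is_derive_scal_l R_AbsRing R_NormedModule (Bfun h) z (bB h z) c). apply is_derive_B; auto; lra.
    - intros z Hz. rewrite Rmin_left, Rmax_right in Hz by lra.
      apply cont_mult. apply bB_cont; auto; lra. apply continuous_const. }
  split. eexists; exact H. apply is_RInt_unique; exact H.
Qed.

Lemma abs_RInt_bound (f w : R -> R) a b : a <= b -> ex_RInt f a b -> ex_RInt w a b ->
  (forall t, a < t < b -> Rabs (f t) <= w t) -> Rabs (RInt f a b) <= RInt w a b.
Proof.
  intros Hab Hf Hw Hb.
  assert (H1 : RInt f a b <= RInt w a b).
  { apply RInt_le; auto. intros t Ht. specialize (Hb t Ht). pose proof (Rle_abs (f t)). lra. }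
  assert (Hw' : ex_RInt (fun t => opp (w t)) a b) by (apply (@ex_RInt_opp R_NormedModule); auto).
  assert (H2 : RInt (fun t => opp (w t)) a b <= RInt f a b).
  { apply RInt_le; auto. intros t Ht. specialize (Hb t Ht). unfold opp; simpl.
    pose proof (Rabs_maj2 (f t)). lra. }
  rewrite (@RInt_opp R_CompleteNormedModule) in H2 by auto. unfold opp in H2; simpl in H2.
  apply Rabs_le. lra.
Qed.

Lemma Kc_bound h (h_smooth : smooth h) (h_mid : forall T, 0 < T < 1 -> 0 < h T < PI / 2)
  (h_right : forall T, 1 <= T -> h T = 0) x z : 0 < x -> 0 < z ->
  exists d, Rmin z x <= d <= Rmax z x /\ Rabs (Kc h x z) <= Rabs (g2 h d) / 2.
Proof.
  intros Hx Hz. destruct (mk_repr h h_smooth h_mid h_right x z Hx Hz) as [d [Hd Hm]].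
  exists d. split; auto. unfold Kc. rewrite Hm.
  unfold Rdiv. rewrite !Rabs_mult, Rabs_Ropp. rewrite (Rabs_right (/ 2)) by lra.
  assert (Rabs (cos (x - z)) <= 1) by (apply Rabs_le; apply COS_bound).
  pose proof (Rabs_pos (g2 h d)). pose proof (Rabs_pos (cos (x - z))).
  apply Rmult_le_compat_r; try lra.
  rewrite <- (Rmult_1_l (Rabs (g2 h d))) at 2. apply Rmult_le_compat_r; lra.
Qed.

Lemma bB_pos h (h_left : forall T, T <= 0 -> h T = PI / 2)
  (h_mid : forall T, 0 < T < 1 -> 0 < h T < PI / 2)
  (h_right : forall T, 1 <= T -> h T = 0) z : 0 < z < 1 -> 0 <= bB h z.
Proof.
  intros Hz. unfold bB, Bfun, cot. apply Rmult_le_pos. left; apply exp_pos.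
  pose proof (cos_h_pos h h_mid h_right z (proj1 Hz)).
  pose proof (sin_h_pos h h_left h_mid z (proj2 Hz)).
  left. apply Rdiv_lt_0_compat; auto.
Qed.

Lemma Gint_bound h (h_smooth : smooth h) (h_left : forall T, T <= 0 -> h T = PI / 2)
  (h_mid : forall T, 0 < T < 1 -> 0 < h T < PI / 2)
  (h_right : forall T, 1 <= T -> h T = 0) x a b c : 0 < a -> a <= b -> b <= x -> x < 1 ->
  (forall t, a <= t <= x -> Rabs (g2 h t) <= c) ->
  Rabs (RInt (Gint h x) a b) <= c / 2 * (Bfun h b - Bfun h a).
Proof.
  intros Ha Hab Hbx Hx Hc.
  destruct (B_int h h_smooth h_left h_mid (c / 2) a b Ha Hab ltac:(lra)) as [Ex Eq].
  rewrite <- Eq. apply abs_RInt_bound; auto.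
  - apply Gint_ex; auto; lra.
  - intros t Ht. unfold Gint. rewrite Rabs_mult.
    rewrite (Rabs_right (bB h t)) by (apply Rle_ge, bB_pos; auto; lra).
    apply Rmult_le_compat_l. apply bB_pos; auto; lra.
    destruct (Kc_bound h h_smooth h_mid h_right x t ltac:(lra) ltac:(lra)) as [d [Hd Hk]].
    assert (Rabs (g2 h d) <= c).
    { apply Hc. rewrite Rmin_left, Rmax_right in Hd by lra. lra. }
    lra.
Qed.

Theorem mainTheorem5 (h : R -> R) (kappa : R)
  (h_smooth : smooth h)
  (h_left : forall T, T <= 0 -> h T = PI / 2)
  (h_mid : forall T, 0 < T < 1 -> 0 < h T < PI / 2)
  (h_right : forall T, 1 <= T -> h T = 0)
  (g3_neg : forall x, 0 < x < 1 -> Derive_n (gfun h) 3 x < 0)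
  (hkappa : 0 < kappa < 1) :
  filterlim (Dfun h kappa) (at_left 1) (locally 0).
Proof.
  apply filterlim_locally. intros eps.
  destruct (continuity_ab_maj (fun t => Rabs (g2 h t)) kappa 1 ltac:(lra)) as [Mx [HM _]].
  { intros c Hc. apply continuity_pt_filterlim. apply continuous_Rabs_comp.
    apply cont_g2; auto. apply Rgt_not_eq, cos_h_pos; auto; lra. }
  set (M0 := Rabs (g2 h Mx)). simpl in HM. fold M0 in HM.
  assert (HM0 : 0 <= M0) by apply Rabs_pos.
  assert (Heps : 0 < eps / 2) by (pose proof (cond_pos eps); lra).
  assert (Hc1 := cont_g2 h h_smooth 1 (Rgt_not_eq _ _ (cos_h_pos h h_mid h_right 1 ltac:(lra)))).
  destruct (proj1 (filterlim_locally (g2 h) (g2 h 1)) Hc1 (mkposreal _ Heps)) as [d1 Hd1].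
  rewrite g2_1 in Hd1; auto.
  set (y := Rmax kappa (1 - d1 / 2)).
  assert (Hd1p := cond_pos d1).
  assert (Hy1 : y < 1) by (unfold y; apply Rmax_lub_lt; lra).
  assert (Hyk : kappa <= y) by apply Rmax_l.
  assert (Hyd : 1 - d1 / 2 <= y) by apply Rmax_r.
  assert (Hsmall : forall t, y <= t <= 1 -> Rabs (g2 h t) <= eps / 2).
  { intros t Ht. left. assert (Hb : ball 1 d1 t).
    { apply ball_R. apply Rabs_def1; lra. }
    specialize (Hd1 t Hb). apply ball_R in Hd1. simpl in Hd1.
    change (Rabs (g2 h t - 0) < eps / 2) in Hd1. rewrite Rminus_0_r in Hd1. exact Hd1. }
  destruct (B_big h h_smooth h_left h_mid h_right (2 * M0 * Bfun h y / eps)) as [d2 [Hd2 HB]].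
  assert (Hp : 0 < Rmin d2 (1 - y)) by (apply Rmin_glb_lt; lra).
  exists (mkposreal _ Hp). intros x Hx Hx1. simpl in Hx1.
  apply ball_R in Hx. change (Rabs (x - 1) < Rmin d2 (1 - y)) in Hx.
  pose proof (Rmin_l d2 (1 - y)). pose proof (Rmin_r d2 (1 - y)).
  apply Rabs_def2 in Hx.
  assert (Hxy : y < x) by lra.
  assert (HBx : 2 * M0 * Bfun h y / eps <= Bfun h x) by (apply HB; lra).
  apply ball_R. rewrite Rminus_0_r.
  unfold Dfun.
  rewrite (RInt_ext _ (Gint h x)).
  2:{ intros z Hz. rewrite Rmin_left, Rmax_right in Hz by lra.
      apply integrand_eq; auto; lra. }
  rewrite <- (RInt_Chasles (Gint h x) kappa y x).
  2:{ apply Gint_ex; auto; lra. }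
  2:{ apply Gint_ex; auto; lra. }
  assert (I1 := Gint_bound h h_smooth h_left h_mid h_right x kappa y M0 ltac:(lra) Hyk ltac:(lra) ltac:(lra)
                  ltac:(intros t Ht; apply HM; lra)).
  assert (I2 := Gint_bound h h_smooth h_left h_mid h_right x y x (eps / 2) ltac:(lra) ltac:(lra) ltac:(lra) ltac:(lra)
                  ltac:(intros t Ht; apply Hsmall; lra)).
  assert (HBpos : forall t, 0 < Bfun h t) by (intro; apply exp_pos).
  pose proof (HBpos x). pose proof (HBpos y). pose proof (HBpos kappa).
  unfold plus; simpl.
  rewrite Rabs_mult, Rabs_Rinv, (Rabs_right (Bfun h x)) by lra.
  pose proof (Rabs_triang (RInt (Gint h x) kappa y) (RInt (Gint h x) y x)).
  assert (Hsum : Rabs (RInt (Gint h x) kappa y + RInt (Gint h x) y x) <= M0 / 2 * Bfun h y + eps / 4 * Bfun h x).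
  { assert (M0 / 2 * (Bfun h y - Bfun h kappa) <= M0 / 2 * Bfun h y).
    { assert (0 <= M0 / 2 * Bfun h kappa) by (apply Rmult_le_pos; lra). lra. }
    assert (eps / 2 / 2 * (Bfun h x - Bfun h y) <= eps / 4 * Bfun h x).
    { assert (0 <= eps / 4 * Bfun h y) by (apply Rmult_le_pos; lra). lra. }
    lra. }
  assert (Hk : 2 * M0 * Bfun h y <= eps * Bfun h x).
  { apply (Rmult_le_compat_l eps) in HBx; [|lra].
    replace (eps * (2 * M0 * Bfun h y / eps)) with (2 * M0 * Bfun h y) in HBx by (field; lra).
    exact HBx. }
  apply Rle_lt_trans with (/ Bfun h x * (M0 / 2 * Bfun h y + eps / 4 * Bfun h x)).
  { apply Rmult_le_compat_l; [left; apply Rinv_0_lt_compat; lra | exact Hsum]. }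
  apply (Rmult_lt_reg_l (Bfun h x)); auto.
  rewrite <- Rmult_assoc, Rinv_r, Rmult_1_l by lra. assert (0 < eps * Bfun h x) by (apply Rmult_lt_0_compat; lra). nra.
Qed.
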